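(* Let $m\geq 3$ and $n\in \mathbb{N}$. Then \[ \sigma'_m(n) =\sum_{k=0}^\infty (-1)^{k+1} \big( P_{m+2,k} \cdot p'_m(n-P_{m+2,k})+ Q_{m+2,k} \cdot p'_m(n-Q_{m+2,k})\big), \] where $P_{m+2,k}=\frac{k(mk-(m-2))}{2}$ and $Q_{m+2,k}=\frac{k(mk+(m-2))}{2}$.
   Context: For $m\ge3$ and $n\in\mathbb{N}$, $\sigma'_m(n)$ is the sum of the positive divisors $d$ of $n$ with $d\equiv 0$, $1$ or $m-1 \pmod m$. $p'_m(n)$ is the number of partitions of $n$ in which every part is congruent to $0$, $1$ or $m-1$ modulo $m$, with $p'_m(0)=1$ and $p'_m(x)=0$ for $x\notin\mathbb{N}_0$. *)

(* Defs.v *)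
From mathcomp Require Import all_boot all_order all_algebra.
Set Implicit Arguments. Unset Strict Implicit. Unset Printing Implicit Defensive.
Import Order.TTheory GRing.Theory Num.Theory.

Definition good_res (m d : nat) : bool :=
  [|| d %% m == 0, d %% m == 1 | d %% m == m.-1].

Definition sigmap (m n : nat) : nat :=
  \sum_(d <- divisors n | good_res m d) d.

(* Partitions of n encoded by multiplicity functions: f i = number of parts
   equal to i (parts are at most n, multiplicities at most n).
   f is a partition of n with all parts good iff 0 is not a part, every part
   is good, and \sum_i i * f i = n.  This is a bijection with the
   (multisets of parts) partitions of n. *)
Definition good_partition (m n : nat) (f : {ffun 'I_n.+1 -> 'I_n.+1}) : bool :=
  [forall i : 'I_n.+1, (f i != ord0) ==> ((0 < i) && good_res m i)]
  && (\sum_(i < n.+1) (i * f i) == n).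

Definition ppart_nat (m n : nat) : nat := #|[pred f : {ffun 'I_n.+1 -> 'I_n.+1} | @good_partition m n f]|.

(* p'_m(x) on integers, 0 outside N_0 (p'_m(0) = 1 automatically). *)
Definition ppart (m : nat) (x : int) : nat :=
  match x with
  | Posz n => ppart_nat m n
  | Negz _ => 0
  end.

Definition Pnum (m k : nat) : nat := (k * (m * k - (m - 2))) %/ 2.
Definition Qnum (m k : nat) : nat := (k * (m * k + (m - 2))) %/ 2.

Local Open Scope ring_scope.
Definition term (m n k : nat) : int :=
  (-1) ^+ k.+1 *
  ((Pnum m k)%:Z * (ppart m (n%:Z - (Pnum m k)%:Z))%:Z
   + (Qnum m k)%:Z * (ppart m (n%:Z - (Qnum m k)%:Z))%:Z).

(* Main.v *)
Require Import Defs.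
From mathcomp Require Import all_boot all_order all_algebra.
From mathcomp Require Import zify ring lra.
Import Order.TTheory GRing.Theory Num.Theory.

Lemma bin2_double k : ('C(k, 2)).*2 = k * k.-1.
Proof.
elim: k => [|k IH] //.
rewrite binS bin1 doubleD IH /=.
case: k {IH} => [|k] //=. lia.
Qed.

Lemma bin2D a b : 'C(a + b, 2) = 'C(a, 2) + a * b + 'C(b, 2).
Proof.
have h1 := bin2_double a; have h2 := bin2_double b; have h3 := bin2_double (a + b).
apply: double_inj; rewrite !doubleD h1 h2 h3.
case: a h1 h3 => [|a] h1 h3; case: b h2 h3 => [|b] h2 h3 /=; lia.
Qed.

Lemma arithP m d k c ck : (0 < m)%N ->
  m * (c + (d + k) * k + ck) + (m * (d + k) - 1) * d =
  (d + k) * (m * (d + k) - 1) + m * c + (m * ck + k).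
Proof.
move=> hm; case hM: (m * (d + k)) => [|M].
  have [hd hk] : d = 0 /\ k = 0 by nia.
  rewrite hd hk; nia.
rewrite subSS subn0 !mulnDr mulnA hM; nia.
Qed.

Lemma expoP m N k : (1 <= m)%N -> (k <= N)%N ->
  m * 'C(N + k, 2) + (m * N - 1) * (N + N - (N + k)) =
  N * (m * N - 1) + m * 'C(N, 2) + (m * 'C(k, 2) + k).
Proof.
move=> hm hk; rewrite bin2D.
have -> : N + N - (N + k) = N - k by lia.
have [d ->] : exists d, N = d + k by exists (N - k); lia.
rewrite addnK; exact: arithP.
Qed.

Lemma arithQ m a b ca cb : (0 < m)%N -> (0 < b)%N -> cb.*2 = b * b.-1 ->
  m * ca + (m * (a + b) - 1) * (a + b + b) =
  (a + b) * (m * (a + b) - 1) + m * (ca + a * b + cb) + (m * cb + (m - 1) * b).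
Proof.
move=> hm hb hcb.
have [M hM] : exists M, m * (a + b) = M.+1 by exists (m * (a + b)).-1; nia.
have [m' hm'] : exists m', m = m'.+1 by exists m.-1; lia.
have [b' hb'] : exists b', b = b'.+1 by exists b.-1; lia.
rewrite hM subSS subn0 hm' subSS subn0.
rewrite hm' hb' /= in hM hcb *.
rewrite -mul2n in hcb.
nia.
Qed.

Lemma expoQ m N j : (2 <= m)%N -> (j < N)%N ->
  m * 'C(N - j.+1, 2) + (m * N - 1) * (N + N - (N - j.+1)) =
  N * (m * N - 1) + m * 'C(N, 2) + (m * 'C(j.+1, 2) + (m - 1) * j.+1).
Proof.
move=> hm hj.
have [a ha] : exists a, N = a + j.+1 by exists (N - j.+1); lia.
rewrite ha addnK bin2D.
have -> : a + j.+1 + (a + j.+1) - a = a + j.+1 + j.+1 by lia.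
apply: arithQ => //; first lia.
exact: bin2_double.
Qed.
Lemma PnumE m k : (2 <= m)%N -> Pnum m k = m * 'C(k, 2) + k.
Proof.
move=> hm; rewrite /Pnum.
have h := bin2_double k.
have -> : k * (m * k - (m - 2)) = (m * 'C(k, 2) + k) * 2.
  case: k h => [|k] h /=; first by rewrite !muln0.
  rewrite -mul2n in h. nia.
by rewrite mulnK.
Qed.

Lemma QnumE m k : (2 <= m)%N -> Qnum m k = m * 'C(k, 2) + (m - 1) * k.
Proof.
move=> hm; rewrite /Qnum.
have h := bin2_double k.
have -> : k * (m * k + (m - 2)) = (m * 'C(k, 2) + (m-1) * k) * 2.
  case: k h => [|k] h /=; first by rewrite !muln0.
  rewrite -mul2n in h. nia.
by rewrite mulnK.
Qed.
Local Open Scope ring_scope.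

Definition cong (K : nat) (p q : {poly int}) := forall i, (i < K)%N -> p`_i = q`_i.

Lemma cong_refl K p : cong K p p. Proof. by []. Qed.
Lemma cong_sym K p q : cong K p q -> cong K q p.
Proof. by move=> h i hi; rewrite h. Qed.
Lemma cong_trans K p q r : cong K p q -> cong K q r -> cong K p r.
Proof. by move=> h1 h2 i hi; rewrite h1 // h2. Qed.
Lemma cong_le K K' p q : (K' <= K)%N -> cong K p q -> cong K' p q.
Proof. by move=> hK h i hi; apply: h; apply: leq_trans hK. Qed.
Lemma congD K p q p' q' : cong K p q -> cong K p' q' -> cong K (p + p') (q + q').
Proof. by move=> h1 h2 i hi; rewrite !coefD h1 // h2. Qed.
Lemma congN K p q : cong K p q -> cong K (- p) (- q).
Proof. by move=> h1 i hi; rewrite !coefN h1. Qed.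
Lemma congB K p q p' q' : cong K p q -> cong K p' q' -> cong K (p - p') (q - q').
Proof. by move=> h1 h2; apply: congD => //; apply: congN. Qed.
Lemma congM K p q p' q' : cong K p q -> cong K p' q' -> cong K (p * p') (q * q').
Proof.
move=> h1 h2 i hi; rewrite !coefM; apply: eq_bigr => j _.
have hj : (j < K)%N by have := ltn_ord j; lia.
have hij : (i - j < K)%N by lia.
by rewrite h1 // h2.
Qed.
Lemma cong_prod K (I : Type) (r : seq I) (P : pred I) F G :
  (forall i, P i -> cong K (F i) (G i)) ->
  cong K (\prod_(i <- r | P i) F i) (\prod_(i <- r | P i) G i).
Proof.
move=> h; elim: r => [|a r IH]; first by rewrite !big_nil.
rewrite !big_cons; case Pa: (P a) => //; exact: congM (h a Pa) IH.
Qed.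
Lemma cong_prod1 K (I : Type) (r : seq I) (P : pred I) F :
  (forall i, P i -> cong K (F i) 1) -> cong K (\prod_(i <- r | P i) F i) 1.
Proof.
move=> h; apply: cong_trans (@cong_prod K I r P F (fun _ => 1) h) _.
by rewrite big1.
Qed.
Lemma cong_XnM K e p q : cong K p q -> cong (e + K) ('X^e * p) ('X^e * q).
Proof.
move=> h i hi; rewrite !coefXnM; case: ifP => // hie.
apply: h; rewrite ltn_subLR //; rewrite leqNgt hie //.
Qed.
Lemma cong_1subXn K a : (K <= a)%N -> cong K (1 - 'X^a) 1.
Proof.
move=> ha i hi; rewrite coefB coefXn coefC.
have -> : (i == a) = false by apply/negbTE; rewrite neq_ltn (leq_trans hi ha).
by rewrite subr0.
Qed.
Lemma coefXD (p : {poly int}) i : ('X * p^`())`_i = p`_i *+ i.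
Proof. by rewrite coefXM; case: i => [|i] //=; rewrite coef_deriv. Qed.
Lemma cong_XD K p q : cong K p q -> cong K ('X * p^`()) ('X * q^`()).
Proof. by move=> h i hi; rewrite !coefXD h. Qed.
Lemma cong_eq K p q : p = q -> cong K p q.
Proof. by move=> ->. Qed.

Section QB.
Variable R : comNzRingType.

Fixpoint qb (q : R) (n i : nat) : R :=
  match n with
  | 0 => (i == 0)%:R
  | n'.+1 => (if i is i'.+1 then qb q n' i' else 0) + q ^+ i * qb q n' i
  end.

Lemma qb_gt q n i : (n < i)%N -> qb q n i = 0.
Proof.
elim: n i => [|n IH] [|i] //= h.
by rewrite IH // IH ?mulr0 ?addr0 //; lia.
Qed.

Lemma qb_0 q n : qb q n 0 = 1.
Proof. by elim: n => [|n IH] //=; rewrite add0r expr0 mul1r. Qed.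

Lemma qbin_thm q x y n :
  \prod_(t < n) (x + y * q ^+ t) =
  \sum_(i < n.+1) qb q n i * q ^+ 'C(i, 2) * y ^+ i * x ^+ (n - i).
Proof.
elim: n y => [|n IH] y.
  by rewrite big_ord0 big_ord1 /= !expr0 !mulr1.
rewrite big_ord_recl expr0 mulr1.
rewrite (eq_bigr (fun t : 'I_n => x + (y * q) * q ^+ t)); last first.
  by move=> t _; rewrite lift0 exprS mulrA.
rewrite IH mulrDl.
rewrite (eq_bigr (fun i : 'I_n.+2 =>
   (if (i : nat) is i'.+1 then qb q n i' else 0) * q ^+ 'C(i, 2) * y ^+ i * x ^+ (n.+1 - i)
   + q ^+ i * qb q n i * q ^+ 'C(i, 2) * y ^+ i * x ^+ (n.+1 - i))); last first.
  by move=> i _ /=; rewrite !mulrDl.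
rewrite big_split /= addrC; congr (_ + _).
  rewrite [RHS]big_ord_recr /= qb_gt // mulr0 !mul0r addr0 mulr_sumr.
  apply: eq_bigr => i _; rewrite subSn; last by have := ltn_ord i; lia.
  rewrite exprS exprMn; ring.
rewrite [RHS]big_ord_recl /= !mul0r add0r mulr_sumr.
apply: eq_bigr => i _; rewrite /= binS bin1 exprD subSS exprS exprMn; ring.
Qed.

Lemma qb_prod q n i :
  qb q n i * \prod_(j < i) (1 - q ^+ j.+1) = \prod_(j < i) (1 - q ^+ (n - j)).
Proof.
elim: n i => [|n IH] i.
  case: i => [|i]; first by rewrite !big_ord0 mulr1.
  by rewrite /= mul0r big_ord_recl subn0 expr0 subrr mul0r.
case: i => [|i]; first by rewrite !big_ord0 mulr1 qb_0.
have e1 : qb q n i * \prod_(j < i.+1) (1 - q ^+ j.+1) =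
  (\prod_(j < i) (1 - q ^+ (n - j))) * (1 - q ^+ i.+1).
  by rewrite big_ord_recr /= mulrA IH.
rewrite /= mulrDl e1 -mulrA IH.
rewrite [RHS]big_ord_recl subn0 (eq_bigr (fun j : 'I_i => 1 - q ^+ (n - j))); last first.
  by [].
case: (leqP i n) => hin.
  rewrite big_ord_recr /=.
  have -> : q ^+ n.+1 = q ^+ i.+1 * q ^+ (n - i) by rewrite -exprD; congr (_ ^+ _); lia.
  ring.
have hz : \prod_(j < i) (1 - q ^+ (n - j)) = 0.
  have hn : (n < i)%N by [].
  rewrite (bigD1 (Ordinal hn)) //= subnn expr0 subrr mul0r //.
by rewrite big_ord_recr /= hz; ring.
Qed.

End QB.
Arguments qb {R}.
Arguments qb_gt {R}.
Arguments qb_0 {R}.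
Arguments qbin_thm {R}.
Arguments qb_prod {R}.

Local Open Scope ring_scope.

Definition Fjt (m N : nat) : {poly int} :=
  \prod_(u < N) ((1 - 'X^(m * u + 1)) * (1 - 'X^(m * u + m.-1))).
Definition Sig (m N : nat) : {poly int} :=
  \sum_(k < N.+1) (-1) ^+ k * 'X^(Pnum m k) * qb ('X^m) (N + N) (N + k)
  + \sum_(j < N) (-1) ^+ j.+1 * 'X^(Qnum m j.+1) * qb ('X^m) (N + N) (N - j.+1).

Lemma sign_sub (a b : nat) : (b <= a)%N ->
  (-1) ^+ (a - b) = (-1) ^+ a * (-1) ^+ b :> {poly int}.
Proof.
move=> h; rewrite -{2}(subnK h) exprD -mulrA -exprD addnn -mul2n exprM sqrrN.
by rewrite !expr1n mulr1.
Qed.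

Lemma jtp_exact m N : (3 <= m)%N -> Fjt m N = Sig m N.
Proof.
move=> hm.
pose c : {poly int} := (-1) ^+ N * 'X^(N * (m * N - 1) + m * 'C(N, 2)).
have hc : c != 0 by rewrite mulf_neq0 ?signr_eq0 // expf_neq0 // polyX_eq0.
apply: (mulfI hc).
have key := qbin_thm ('X^m : {poly int}) ('X^(m * N - 1)) (-1) (N + N).
transitivity (\prod_(t < N + N) ('X^(m * N - 1) + (-1) * ('X^m) ^+ t) : {poly int}); last first.
  rewrite key -addnS big_split_ord /= /Sig mulrDr addrC; congr (_ + _).
    rewrite mulr_sumr; apply: eq_bigr => k _.
    have hk : (k <= N)%N by have := ltn_ord k; lia.
    rewrite -!exprM (PnumE _ _ (ltnW hm)) exprD.
    have e : 'X^(m * 'C(N + k, 2)) * 'X^((m * N - 1) * (N + N - (N + k))) =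
      'X^(N * (m * N - 1) + m * 'C(N, 2)) * 'X^(m * 'C(k, 2) + k) :> {poly int}.
      by rewrite -!exprD expoP //; lia.
    transitivity (qb ('X^m) (N + N) (N + k) * (-1) ^+ N * (-1) ^+ k *
      ('X^(m * 'C(N + k, 2)) * 'X^((m * N - 1) * (N + N - (N + k)))) : {poly int}); first ring.
    by rewrite e /c; ring.
  rewrite mulr_sumr (reindex_inj rev_ord_inj) /=; apply: eq_bigr => j _.
  have hj : (j < N)%N by [].
  rewrite -!exprM (QnumE _ _ (ltnW hm)) sign_sub //.
  have e : 'X^(m * 'C(N - j.+1, 2)) * 'X^((m * N - 1) * (N + N - (N - j.+1))) =
      'X^(N * (m * N - 1) + m * 'C(N, 2)) * 'X^(m * 'C(j.+1, 2) + (m - 1) * j.+1) :> {poly int}.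
    by rewrite -!exprD expoQ //; lia.
  transitivity (qb ('X^m) (N + N) (N - j.+1) * (-1) ^+ N * (-1) ^+ j.+1 *
      ('X^(m * 'C(N - j.+1, 2)) * 'X^((m * N - 1) * (N + N - (N - j.+1)))) : {poly int}); first ring.
  by rewrite e /c; ring.
rewrite big_split_ord /= (reindex_inj rev_ord_inj) /=.
rewrite (eq_bigr (fun u : 'I_N => (-1) * 'X^(m * (N - u.+1)) * (1 - 'X^(m * u + m.-1)))); last first.
  move=> u _; have hu := ltn_ord u.
  have e : (m * N - 1 = m * (N - u.+1) + (m * u + m.-1))%N by nia.
  by rewrite e exprD -exprM; ring.
rewrite [X in _ = _ * X](eq_bigr (fun u : 'I_N => 'X^(m * N - 1) * (1 - 'X^(m * u + 1)))); last first.
  move=> u _; have hu := ltn_ord u; have e : (m * (N + u) = (m * N - 1) + (m * u + 1))%N by nia.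
  by rewrite -exprM e exprD; ring.
rewrite !big_split /= prodrXr !prodr_const !card_ord -exprM.
have hs : (\sum_(i < N) m * (N - i.+1) = m * 'C(N, 2))%N.
  rewrite -big_distrr /=; congr (_ * _)%N.
  rewrite (reindex_inj rev_ord_inj) /= -bin2_sum big_mkord.
  apply: eq_bigr => i _; have := ltn_ord i.  lia.
rewrite hs /c /Fjt big_split /= exprD mulnC; ring.
Qed.

Local Open Scope ring_scope.

Lemma cong_sum K (I : Type) (r : seq I) (P : pred I) F G :
  (forall i, P i -> cong K (F i) (G i)) ->
  cong K (\sum_(i <- r | P i) F i) (\sum_(i <- r | P i) G i).
Proof.
move=> h; elim: r => [|a r IH]; first by rewrite !big_nil.
rewrite !big_cons; case Pa: (P a) => //; exact: congD (h a Pa) IH.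
Qed.

Definition Poch (m n : nat) : {poly int} := \prod_(j < n) (1 - ('X^m) ^+ j.+1).

Lemma qb_poch m n i : (0 < m)%N -> (i <= n)%N ->
  cong (minn i (n - i)).+1 (qb ('X^m) n i * Poch m n) 1.
Proof.
move=> hm hin; rewrite /Poch -(big_mkord (fun _ => true) (fun j => 1 - ('X^m : {poly int}) ^+ j.+1)) (big_cat_nat (leq0n i) hin) /=.
rewrite big_mkord mulrA qb_prod.
rewrite [X in _ * X](_ : _ = \prod_(j < n - i) (1 - ('X^m : {poly int}) ^+ (j + i).+1)); last first.
  by rewrite -{1}(add0n i) big_addn big_mkord.
rewrite -[X in cong _ _ X](mulr1 1); apply: congM.
  apply: cong_prod1 => j _; rewrite -exprM; apply: cong_1subXn.
  have := ltn_ord j; nia.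
apply: cong_prod1 => j _; rewrite -exprM; apply: cong_1subXn.
nia.
Qed.

Definition Theta (m N : nat) : {poly int} :=
  \sum_(k < N.+1) (-1) ^+ k * ('X^(Pnum m k) + 'X^(Qnum m k)) - 1.

Lemma ThetaE m N : Theta m N =
  \sum_(k < N.+1) (-1) ^+ k * 'X^(Pnum m k)
  + \sum_(j < N) (-1) ^+ j.+1 * 'X^(Qnum m j.+1).
Proof.
rewrite /Theta (eq_bigr (fun k : 'I_N.+1 => (-1) ^+ k * 'X^(Pnum m k) + (-1) ^+ k * 'X^(Qnum m k))); last first.
  by move=> k _; rewrite mulrDr.
rewrite big_split /= [X in _ + X - _]big_ord_recl /=.
have -> : Qnum m 0 = 0%N by rewrite /Qnum mul0n.
by rewrite expr0 mul1r; ring.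
Qed.

Lemma theta_cong m N : (3 <= m)%N ->
  cong N.+1 (Poch m (N + N) * Fjt m N) (Theta m N).
Proof.
move=> hm; rewrite jtp_exact // ThetaE /Sig mulrDr.
apply: congD; rewrite mulr_sumr; apply: cong_sum => k _.
  have hk : (k <= N)%N by have := ltn_ord k; lia.
  have -> : Poch m (N + N) * ((-1) ^+ k * 'X^(Pnum m k) * qb ('X^m) (N + N) (N + k))
    = (-1) ^+ k * ('X^(Pnum m k) * (qb ('X^m) (N + N) (N + k) * Poch m (N + N))) by ring.
  apply: (@cong_trans _ _ ((-1) ^+ k * ('X^(Pnum m k) * 1))); last by rewrite mulr1.
  apply: congM => //; apply: (@cong_le (Pnum m k + (minn (N + k) (N + N - (N + k))).+1)).
    rewrite PnumE; last lia.
    have -> : minn (N + k) (N + N - (N + k)) = (N - k)%N by lia.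
    nia.
  apply: cong_XnM; apply: qb_poch; lia.
have hj : (k < N)%N by [].
have -> : Poch m (N + N) * ((-1) ^+ k.+1 * 'X^(Qnum m k.+1) * qb ('X^m) (N + N) (N - k.+1))
    = (-1) ^+ k.+1 * ('X^(Qnum m k.+1) * (qb ('X^m) (N + N) (N - k.+1) * Poch m (N + N))) by ring.
apply: (@cong_trans _ _ ((-1) ^+ k.+1 * ('X^(Qnum m k.+1) * 1))); last by rewrite mulr1.
apply: congM => //; apply: (@cong_le (Qnum m k.+1 + (minn (N - k.+1) (N + N - (N - k.+1))).+1)).
  rewrite QnumE; last lia.
  have -> : minn (N - k.+1) (N + N - (N - k.+1)) = (N - k.+1)%N by lia.
  nia.
apply: cong_XnM; apply: qb_poch; lia.
Qed.

Definition tl (m N : nat) : seq nat :=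
  ([seq m * j.+1 | j <- iota 0 (N + N)] ++ [seq m * u + 1 | u <- iota 0 N]
  ++ [seq m * u + m.-1 | u <- iota 0 N])%N.

Lemma big_iota_ord (F : nat -> {poly int}) n :
  \prod_(j <- iota 0 n) F j = \prod_(j < n) F j.
Proof. by rewrite -(big_mkord (fun _ => true)) /index_iota subn0. Qed.

Lemma tl_prod m N : Poch m (N + N) * Fjt m N = \prod_(a <- tl m N) (1 - 'X^a).
Proof.
rewrite /tl !big_cat !big_map !big_iota_ord /Poch /Fjt big_split /=.
congr (_ * _); apply: eq_bigr => j _; by rewrite exprM.
Qed.

Local Close Scope ring_scope.

Definition gd (m i : nat) : bool := (0 < i)%N && good_res m i.

Lemma mem_map_iotaP (f : nat -> nat) n a :
  reflect (exists2 j, (j < n)%N & a = f j) (a \in [seq f j | j <- iota 0 n]).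
Proof.
apply: (iffP mapP) => [[j hj ->]|[j hj ->]]; exists j => //.
  by move: hj; rewrite mem_iota.
by rewrite mem_iota.
Qed.

Lemma res0 m j : (m * j) %% m = 0%N. Proof. by rewrite modnMr. Qed.
Lemma resc m u c : (c < m)%N -> (m * u + c) %% m = c.
Proof. by move=> h; rewrite mulnC modnMDl modn_small. Qed.

Lemma tl_mem m N a : (3 <= m)%N -> (a < N)%N -> (a \in tl m N) = gd m a.
Proof.
move=> hm haN; rewrite /tl !mem_cat /gd /good_res.
apply/idP/idP.
  case/or3P => /mem_map_iotaP [j hj ->].
  - by rewrite res0 eqxx /=; nia.
  - rewrite resc ?eqxx ?orbT /=; lia.
  - rewrite resc ?eqxx ?orbT /=; lia.
case/andP => ha0 hr.
have hd := divn_eq a m; have hq := leq_div a m.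
move: (a %/ m) (a %% m) hd hq hr => q r hd hq hr.
case/or3P: hr => /eqP hr; rewrite hr in hd.
- apply/orP; left; apply/mem_map_iotaP; exists q.-1.
    lia.
  rewrite hd; case: q hq hd => [|q] hq hd /=; first by lia.
  by rewrite addn0 mulnC.
- apply/orP; right; apply/orP; left; apply/mem_map_iotaP; exists q; first lia.
  by rewrite hd mulnC.
- apply/orP; right; apply/orP; right; apply/mem_map_iotaP; exists q; first lia.
  by rewrite hd mulnC.
Qed.

Lemma tl_uniq m N : (3 <= m)%N -> uniq (tl m N).
Proof.
move=> hm; rewrite /tl !cat_uniq.
have i1 : uniq [seq m * j.+1 | j <- iota 0 (N + N)].
  rewrite map_inj_uniq ?iota_uniq // => x y /eqP; rewrite eqn_pmul2l; last lia.
  by move/eqP => [].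
have i2 : uniq [seq m * u + 1 | u <- iota 0 N].
  rewrite map_inj_uniq ?iota_uniq // => x y /eqP; rewrite eqn_add2r eqn_pmul2l; last lia.
  by move/eqP.
have i3 : uniq [seq m * u + m.-1 | u <- iota 0 N].
  rewrite map_inj_uniq ?iota_uniq // => x y /eqP; rewrite eqn_add2r eqn_pmul2l; last lia.
  by move/eqP.
rewrite i1 i2 i3 /= andbT.
apply/andP; split.
  apply/hasPn => a; rewrite mem_cat => /orP [] /mem_map_iotaP [u _ ->];
    apply/negP => /mem_map_iotaP [j _ /(congr1 (modn^~ m))];
    rewrite res0 resc //; lia.
apply/hasPn => a /mem_map_iotaP [u _ ->].
apply/negP => /mem_map_iotaP [j _ /(congr1 (modn^~ m))].
rewrite !resc //; lia.
Qed.

Local Open Scope ring_scope.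

Lemma cong_perm_prod (s t : seq nat) x : uniq s -> uniq t ->
  (forall a, (a <= x)%N -> (a \in s) = (a \in t)) ->
  cong x.+1 (\prod_(a <- s) (1 - 'X^a)) (\prod_(a <- t) (1 - 'X^a)).
Proof.
move=> us ut h.
rewrite (bigID (fun a => (a <= x)%N)) [X in cong _ _ X](bigID (fun a => (a <= x)%N)) /=.
have -> : \prod_(a <- s | (a <= x)%N) (1 - 'X^a) = \prod_(a <- t | (a <= x)%N) (1 - 'X^a) :> {poly int}.
  have hp : perm_eq [seq a <- s | (a <= x)%N] [seq a <- t | (a <= x)%N].
    apply: uniq_perm; [exact: filter_uniq | exact: filter_uniq |].
    move=> a; rewrite !mem_filter; case ha: (a <= x)%N; last by [].
    by rewrite /= (h a ha).
  by rewrite -[LHS]big_filter -[RHS]big_filter (perm_big _ hp).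
apply: congM; first exact: cong_refl.
apply: (@cong_trans _ _ 1).
  by apply: cong_prod1 => a ha; apply: cong_1subXn; rewrite ltnNge.
by apply: cong_sym; apply: cong_prod1 => a ha; apply: cong_1subXn; rewrite ltnNge.
Qed.

Definition Fg (m K : nat) : {poly int} := \prod_(i < K.+1 | gd m i) (1 - 'X^i).

Lemma Fg_list m K : Fg m K = \prod_(a <- [seq i <- iota 0 K.+1 | gd m i]) (1 - 'X^a).
Proof.
by rewrite big_filter /Fg -(big_mkord (gd m) (fun i => 1 - 'X^i)) /index_iota subn0.
Qed.

Lemma Fg_theta m K N y : (3 <= m)%N -> (y <= K)%N -> (y < N)%N ->
  cong y.+1 (Fg m K) (Theta m N).
Proof.
move=> hm hyK hyN; rewrite Fg_list.
apply: (@cong_trans _ _ (Poch m (N + N) * Fjt m N)).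
  rewrite tl_prod; apply: cong_perm_prod; rewrite ?filter_uniq ?iota_uniq ?tl_uniq //.
  move=> a ha; rewrite mem_filter mem_iota (tl_mem _ _ _ hm) /=; last lia.
  by case: (gd m a) => //=; lia.
apply: (@cong_le N.+1); first lia.
exact: theta_cong.
Qed.

Lemma Fg_Fg m K K' y : (y <= K)%N -> (y <= K')%N -> cong y.+1 (Fg m K) (Fg m K').
Proof.
move=> h1 h2; rewrite !Fg_list; apply: cong_perm_prod; rewrite ?filter_uniq ?iota_uniq //.
move=> a ha; rewrite !mem_filter !mem_iota /=.
by case: (gd m a) => //=; lia.
Qed.

Local Open Scope ring_scope.

Definition Hs (m K : nat) : {poly int} :=
  \prod_(i < K.+1) \sum_(j < K.+1) (if gd m i then 'X^(i * j) else (j == 0)%:R).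

Lemma Hs_top m K : (Hs m K)`_K = (ppart_nat m K)%:Z.
Proof.
rewrite /Hs bigA_distr_bigA /= coef_sum.
transitivity (\sum_(f : {ffun 'I_K.+1 -> 'I_K.+1}) ((@good_partition m K f)%:R : int)).
  apply: eq_bigr => f _.
  rewrite /good_partition.
  case: (boolP [forall i : 'I_K.+1, (f i != ord0) ==> ((0 < i)%N && good_res m i)]) => hf /=.
    rewrite (eq_bigr (fun i : 'I_K.+1 => 'X^(i * f i))); last first.
      move=> i _; case hg: (gd m i) => //.
      move/forallP: hf => /(_ i); rewrite /gd in hg; rewrite hg implybF negbK => /eqP ->.
      by rewrite muln0 expr0.
    by rewrite prodrXr coefXn eq_sym.
  have [i /andP [hi hg]] : exists i, (f i != ord0) && ~~ ((0 < i)%N && good_res m i).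
    move: hf; rewrite negb_forall => /existsP [i]; rewrite negb_imply => h; by exists i.
  rewrite (bigD1 i) //= /gd (negbTE hg).
  rewrite (negbTE hi).
  by rewrite mul0r coef0.
rewrite /ppart_nat -sum1_card -natz natr_sum.
rewrite [RHS]big_mkcond; apply: eq_bigr => f _; rewrite inE; by case: (good_partition _ _).
Qed.

Lemma geo_id (x : {poly int}) n : (1 - x) * \sum_(j < n) x ^+ j = 1 - x ^+ n.
Proof.
by rewrite -opprB mulNr -subrX1 opprB.
Qed.

Definition gf (m K : nat) (i : 'I_K.+1) : {poly int} :=
  if gd m i then \sum_(j < K.+1) 'X^(i * j) else 1.
Definition ff (m : nat) (K : nat) (i : 'I_K.+1) : {poly int} :=
  if gd m i then 1 - 'X^i else 1.
Definition wf (m K : nat) (i : 'I_K.+1) : {poly int} :=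
  if gd m i then (\sum_(j < K.+1) 'X^(i * j.+1)) *+ i else 0.
Definition Ss (m K : nat) : {poly int} := \sum_(i < K.+1) wf m K i.

Lemma HsE m K : Hs m K = \prod_(i < K.+1) gf m K i.
Proof.
apply: eq_bigr => i _; rewrite /gf; case: (gd m i) => //.
rewrite big_ord_recl /= big1 ?addr0 //.
Qed.

Lemma FgE m K : Fg m K = \prod_(i < K.+1) ff m K i.
Proof. by rewrite /Fg big_mkcond. Qed.

Lemma fg1 m K i : cong K.+1 (ff m K i * gf m K i) 1.
Proof.
rewrite /ff /gf; case hg: (gd m i); last by rewrite mulr1.
rewrite (eq_bigr (fun j : 'I_K.+1 => ('X^i) ^+ j)); last by move=> j _; rewrite exprM.
rewrite geo_id -exprM; apply: cong_1subXn.
move: hg; rewrite /gd => /andP [h _]; nia.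
Qed.

Lemma fgw m K i : cong K.+1 ('X * (ff m K i)^`() * gf m K i) (- wf m K i).
Proof.
apply: cong_eq.
rewrite /ff /gf /wf; case hg: (gd m i); last by rewrite -polyC1 derivC mulr0 mul0r oppr0.
move: hg; rewrite /gd => /andP [h _].
rewrite derivB -polyC1 derivC sub0r derivXn.
case: (nat_of_ord i) h => [|k] // _ /=.
rewrite mulrN mulNr mulrnAr mulrnAl -exprS mulr_sumr; congr (- (_ *+ _)).
by apply: eq_bigr => j _; rewrite -exprD mulnS.
Qed.

Lemma cong_pfg K (I : Type) (r : seq I) (f g : I -> {poly int}) :
  (forall i, cong K (f i * g i) 1) ->
  cong K ((\prod_(i <- r) f i) * \prod_(i <- r) g i) 1.
Proof.
move=> h1; elim: r => [|a r IH]; first by rewrite !big_nil mulr1.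
rewrite !big_cons.
have -> : f a * \prod_(j <- r) f j * (g a * \prod_(j <- r) g j) =
  (f a * g a) * ((\prod_(j <- r) f j) * \prod_(j <- r) g j) by ring.
by rewrite -[X in cong _ _ X](mulr1 1); apply: congM.
Qed.

Lemma cong_dlog K (I : Type) (r : seq I) (f g w : I -> {poly int}) :
  (forall i, cong K (f i * g i) 1) ->
  (forall i, cong K ('X * (f i)^`() * g i) (- w i)) ->
  cong K ('X * (\prod_(i <- r) f i)^`() * \prod_(i <- r) g i) (- \sum_(i <- r) w i).
Proof.
move=> h1 h2; elim: r => [|a r IH].
  by rewrite !big_nil -polyC1 derivC mulr0 mul0r oppr0.
rewrite !big_cons derivM.
have -> : 'X * ((f a)^`() * \prod_(j <- r) f j + f a * (\prod_(j <- r) f j)^`()) *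
    (g a * \prod_(j <- r) g j) =
  ('X * (f a)^`() * g a) * ((\prod_(j <- r) f j) * \prod_(j <- r) g j)
  + (f a * g a) * ('X * (\prod_(j <- r) f j)^`() * \prod_(j <- r) g j) by ring.
have -> : - (w a + \sum_(j <- r) w j) = (- w a) * 1 + 1 * (- \sum_(j <- r) w j) by ring.
apply: congD; apply: congM => //; exact: cong_pfg.
Qed.

Local Open Scope ring_scope.

Lemma Hs_Fg m K : cong K.+1 (Hs m K * Fg m K) 1.
Proof.
rewrite HsE FgE mulrC; apply: cong_pfg => i; exact: fg1.
Qed.

Lemma Fg_deriv m K : cong K.+1 ('X * (Fg m K)^`() * Hs m K) (- Ss m K).
Proof.
rewrite HsE FgE /Ss; apply: cong_dlog => i; [exact: fg1 | exact: fgw].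
Qed.

Lemma Hs_deriv m K : cong K.+1 ('X * (Hs m K)^`()) (Hs m K * Ss m K).
Proof.
set H := Hs m K; set F := Fg m K; set S := Ss m K.
have e1 : cong K.+1 (H * F) 1 := Hs_Fg m K.
have e2 : cong K.+1 ('X * F^`() * H) (- S) := Fg_deriv m K.
have e3 : cong K.+1 ('X * (H * F)^`()) 0.
  have := @cong_XD _ _ _ e1; by rewrite -polyC1 derivC mulr0.
apply: (@cong_trans _ _ ('X * H^`() * (H * F))).
  rewrite -[X in cong _ X _]mulr1; apply: congM => //; exact: cong_sym.
have -> : 'X * H^`() * (H * F) = ('X * (H * F)^`()) * H - H * ('X * F^`() * H).
  by rewrite derivM; ring.
have -> : H * S = 0 * H - H * (- S) by ring.
apply: congB; apply: congM => //.
Qed.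

Lemma Hs_uniq m K y : (y <= K)%N -> cong y.+1 (Hs m y) (Hs m K).
Proof.
move=> hy.
have e1 : cong y.+1 (Hs m y * Fg m y) 1 := Hs_Fg m y.
have e2 : cong y.+1 (Hs m K * Fg m K) 1 := @cong_le K.+1 y.+1 _ _ hy (Hs_Fg m K).
have e3 : cong y.+1 (Fg m K) (Fg m y) := @Fg_Fg m K y y hy (leqnn y).
apply: (@cong_trans _ _ (Hs m y * (Hs m K * Fg m K))).
  rewrite -[X in cong _ X _]mulr1; apply: congM => //; exact: cong_sym.
apply: (@cong_trans _ _ (Hs m y * (Hs m K * Fg m y))).
  by apply: congM => //; apply: congM.
have -> : Hs m y * (Hs m K * Fg m y) = (Hs m y * Fg m y) * Hs m K by ring.
rewrite -[X in cong _ _ X]mul1r; apply: congM => //.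
Qed.

Lemma Hs_coef m K y : (y <= K)%N -> (Hs m K)`_y = (ppart_nat m y)%:Z.
Proof.
move=> hy; rewrite -(@Hs_uniq m K y hy y (ltnSn y)); exact: Hs_top.
Qed.

Local Close Scope ring_scope.

Lemma sigma_nat m K t : (0 < t <= K)%N ->
  \sum_(i < K.+1 | gd m i && (i %| t)) i = sigmap m t.
Proof.
move=> /andP [ht htK].
rewrite -(big_mkord (fun i => gd m i && (i %| t)) (fun i => i)) /index_iota subn0.
rewrite (eq_bigl (fun i => ((0 < i) && (i %| t)) && good_res m i)); last first.
  by move=> i; rewrite /gd; case: (0 < i); case: (i %| t); case: (good_res m i).
rewrite -big_filter_cond /sigmap.
have hp : perm_eq [seq i <- iota 0 K.+1 | (0 < i) && (i %| t)] (divisors t).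
  apply: uniq_perm; [exact: filter_uniq (iota_uniq _ _) | exact: divisors_uniq |].
  move=> d; rewrite mem_filter mem_iota -dvdn_divisors //.
  case hd: (d %| t); rewrite ?andbF ?andbT //=.
  have hdt := dvdn_leq ht hd.
  case: d hd hdt => [|d] hd hdt /=; last lia.
  by move: hd; rewrite dvd0n => /eqP ht0; rewrite ht0 in ht.
by rewrite (perm_big _ hp).
Qed.

Local Open Scope ring_scope.

Lemma sumind i t K : (0 < i)%N -> (0 < t <= K)%N ->
  \sum_(j < K.+1) (((t == i * j.+1)%N)%:R : int) = ((i %| t)%N)%:R.
Proof.
move=> hi /andP [ht htK].
case hd: (i %| t)%N.
  move/dvdnP: hd => [c hc].
  have hc0 : (0 < c)%N by move: ht; rewrite hc; case: c {hc} => //.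
  have hcK : (c.-1 < K.+1)%N by rewrite hc in htK; nia.
  rewrite (bigD1 (Ordinal hcK)) //= big1 ?addr0.
    by rewrite prednK // mulnC hc eqxx.
  move=> j hj; apply/eqP; rewrite pnatr_eq0 eqb0; apply/eqP => h.
  move/eqP: hj; apply; apply: val_inj => /=.
  rewrite hc mulnC in h; have := eqn_pmul2l hi; move=> /(_ c j.+1); rewrite h eqxx => /esym/eqP.
  by move=> ->.
rewrite big1 // => j _; apply/eqP; rewrite pnatr_eq0 eqb0; apply/negP => /eqP h.
by move: hd; rewrite h dvdn_mulr.
Qed.

Lemma Ss_coef m K t : (0 < t <= K)%N -> (Ss m K)`_t = (sigmap m t)%:Z.
Proof.
move=> ht; rewrite /Ss coef_sum -(@sigma_nat m K t ht) -natz natr_sum.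
rewrite [RHS]big_mkcond; apply: eq_bigr => i _.
rewrite /wf; case hg: (gd m i) => /=; last by rewrite coef0.
have hi : (0 < i)%N by move: hg; rewrite /gd => /andP [].
rewrite coefMn coef_sum (eq_bigr (fun j : 'I_K.+1 => (((t == i * j.+1)%N)%:R : int))); last first.
  by move=> j _; rewrite coefXn.
rewrite sumind //; case: (i %| t)%N => //=.
by rewrite mul0rn.
Qed.

Lemma Ss_coef0 m K : (Ss m K)`_0 = 0.
Proof.
rewrite /Ss coef_sum big1 // => i _; rewrite /wf; case hg: (gd m i); last by rewrite coef0.
have hi : (0 < i)%N by move: hg; rewrite /gd => /andP [].
rewrite coefMn coef_sum big1 ?mul0rn // => j _; rewrite coefXn.
have -> : (0 == i * j.+1)%N = false by apply/negbTE; rewrite eq_sym -lt0n muln_gt0 hi.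
by [].
Qed.

Local Open Scope ring_scope.

Lemma ppart_neg m (z : int) : z < 0 -> ppart m z = 0%N.
Proof. by case: z. Qed.

Lemma coef_sign k (p : {poly int}) i : ((-1) ^+ k * p)`_i = (-1) ^+ k * p`_i.
Proof.
rewrite -signr_odd -[in RHS]signr_odd; case: (odd k); last by rewrite !expr0 !mul1r.
by rewrite !expr1 !mulN1r coefN.
Qed.

Lemma coef_shift m y e : ('X^e * Hs m y)`_y = (ppart m (y%:Z - e%:Z))%:Z.
Proof.
rewrite coefXnM; case: ltnP => h.
  by rewrite ppart_neg //; rewrite subr_lt0 ltz_nat.
by rewrite subzn // Hs_coef // leq_subr.
Qed.

Lemma a_nat m N y : (3 <= m)%N -> (y < N)%N ->
  \sum_(k < N) (-1) ^+ k * ((ppart m (y%:Z - (Pnum m k)%:Z))%:Z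
                          + (ppart m (y%:Z - (Qnum m k)%:Z))%:Z)
  - (ppart m y%:Z)%:Z = (y == 0)%:R.
Proof.
move=> hm hy.
have e1 := Hs_Fg m y.
have e2 : cong y.+1 (Fg m y) (Theta m N) := @Fg_theta m y N y hm (leqnn y) hy.
have e3 : cong y.+1 (Theta m N * Hs m y) 1.
  apply: (@cong_trans _ _ (Hs m y * Fg m y)) => //.
  rewrite mulrC; apply: congM => //; exact: cong_sym.
have := e3 y (ltnSn y); rewrite coef1 => <-.
rewrite /Theta mulrBl mul1r coefB mulr_suml coef_sum big_ord_recr /=.
have hP : (y < Pnum m N)%N by rewrite PnumE; [nia | lia].
have hQ : (y < Qnum m N)%N by rewrite QnumE; [nia | lia].
rewrite -mulrA coef_sign mulrDl coefD !coefXnM hP hQ addr0 mulr0 addr0.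
congr (_ - _); last by rewrite Hs_coef.
apply: eq_bigr => k _; rewrite -mulrA coef_sign mulrDl coefD !coef_shift //.
Qed.

Lemma b_nat m x : (x%:Z * (ppart m x%:Z)%:Z) =
  \sum_(j < x) (sigmap m j.+1)%:Z * (ppart m (x%:Z - (j.+1)%:Z))%:Z.
Proof.
have := @Hs_deriv m x x (ltnSn x); rewrite coefXD mulrC coefM big_ord_recl Ss_coef0 mul0r add0r.
rewrite Hs_coef // => h.
rewrite [LHS](_ : _ = (ppart_nat m x)%:Z *+ x); last by rewrite -mulr_natl natz.
rewrite h; apply: eq_bigr => j _ /=.
have -> : bump 0 j = j.+1 by rewrite /bump leq0n.
rewrite Ss_coef; last by have := ltn_ord j; lia.
rewrite Hs_coef ?leq_subr // subzn //.
Qed.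

Lemma b_int m n (x : int) : x <= n%:Z ->
  x * (ppart m x)%:Z = \sum_(j < n) (sigmap m j.+1)%:Z * (ppart m (x - (j.+1)%:Z))%:Z.
Proof.
case: x => [x|x] hx.
  have hxn : (x <= n)%N by rewrite -lez_nat.
  rewrite b_nat (@big_ord_widen _ _ _ x n (fun j : nat => (sigmap m j.+1)%:Z * (ppart m (x%:Z - (j.+1)%:Z))%:Z) hxn).
  rewrite [RHS](bigID (fun j : 'I_n => (j < x)%N)) /=.
  rewrite [X in _ = _ + X]big1 ?addr0 // => j hj.
  rewrite ppart_neg ?mulr0 //; rewrite subr_lt0 ltz_nat; lia.
rewrite ppart_neg // mulr0 big1 // => j _.
by rewrite ppart_neg ?mulr0.
Qed.

Local Open Scope ring_scope.

Lemma main_sum m n N : (3 <= m)%N -> (0 < n)%N -> (n < N)%N ->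
  (sigmap m n)%:Z = \sum_(k < N) term m n k.
Proof.
move=> hm hn hN.
pose pp (z : int) : int := (ppart m z)%:Z.
pose sg (j : nat) : int := (sigmap m j)%:Z.
pose T (y : nat) : int := \sum_(k < N) (-1) ^+ k * (pp (y%:Z - (Pnum m k)%:Z) + pp (y%:Z - (Qnum m k)%:Z)) - pp y%:Z.
have ha : forall y, (y <= n)%N -> T y = (y == 0)%:R.
  by move=> y hy; rewrite /T /pp a_nat //; lia.
pose D (z : nat) : int := \sum_(j < n) sg j.+1 * pp (n%:Z - z%:Z - (j.+1)%:Z).
have hz : forall z : nat, n%:Z * pp (n%:Z - z%:Z) = z%:Z * pp (n%:Z - z%:Z) + D z.
  move=> z; have := @b_int m n (n%:Z - z%:Z); rewrite /D /pp /sg => <-; last first.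
    by rewrite lerBlDr lerDl.
  ring.
have key1 : n%:Z * T n = \sum_(k < N) (-1) ^+ k * ((Pnum m k)%:Z * pp (n%:Z - (Pnum m k)%:Z)
      + (Qnum m k)%:Z * pp (n%:Z - (Qnum m k)%:Z))
    + (\sum_(k < N) (-1) ^+ k * (D (Pnum m k) + D (Qnum m k)) - D 0).
  rewrite /T mulrBr mulr_sumr.
  have h0 : n%:Z * pp n%:Z = D 0 by have := hz 0%N; rewrite subr0 mul0r add0r.
  rewrite h0 addrA; congr (_ - _); rewrite -big_split /=; apply: eq_bigr => k _.
  by rewrite mulrCA mulrDr !hz; ring.
have key2 : \sum_(k < N) (-1) ^+ k * (D (Pnum m k) + D (Qnum m k)) - D 0 =
    \sum_(j < n) sg j.+1 * T (n - j.+1)%N.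
  rewrite [RHS](eq_bigr (fun j : 'I_n => \sum_(k < N) (-1) ^+ k * (sg j.+1 * pp (n%:Z - (Pnum m k)%:Z - (j.+1)%:Z))
     + \sum_(k < N) (-1) ^+ k * (sg j.+1 * pp (n%:Z - (Qnum m k)%:Z - (j.+1)%:Z))
     - sg j.+1 * pp (n%:Z - 0%:Z - (j.+1)%:Z))); last first.
    move=> j _; have hj := ltn_ord j.
    have hs : ((n - j.+1)%N)%:Z = n%:Z - (j.+1)%:Z by rewrite subzn.
    rewrite /T hs mulrBr mulr_sumr -big_split /= subr0; congr (_ - _).
    apply: eq_bigr => k _.
    have e1 : n%:Z - (j.+1)%:Z - (Pnum m k)%:Z = n%:Z - (Pnum m k)%:Z - (j.+1)%:Z by ring.
    have e2 : n%:Z - (j.+1)%:Z - (Qnum m k)%:Z = n%:Z - (Qnum m k)%:Z - (j.+1)%:Z by ring.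
    rewrite e1 e2; ring.
  rewrite sumrB big_split /= [X in X + _ - _]exchange_big [X in _ + X - _]exchange_big /=.
  rewrite -big_split /= /D; congr (_ - _); apply: eq_bigr => k _.
  rewrite mulrDr !mulr_sumr; congr (_ + _); apply: eq_bigr => j _; ring.
have key3 : \sum_(j < n) sg j.+1 * T (n - j.+1)%N = sg n.
  rewrite (eq_bigr (fun j : 'I_n => sg j.+1 * ((n - j.+1 == 0)%N)%:R)); last first.
    by move=> j _; rewrite ha // leq_subr.
  case: n {hz key1 key2 ha D hN} hn => [|n'] // _.
  rewrite big_ord_recr /= subnn eqxx mulr1 big1 ?add0r // => j _.
  have hj := ltn_ord j.
  have -> : (n'.+1 - j.+1 == 0)%N = false by apply/negbTE; rewrite subn_eq0 -ltnNge ltnS.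
  by rewrite mulr0.
have hT : T n = 0 by rewrite ha // (negbTE (lt0n_neq0 hn)).
have h := key1; rewrite hT mulr0 key2 key3 in h.
set S := \sum_(k < N) _ in h.
have -> : \sum_(k < N) term m n k = - S.
  rewrite /S -sumrN; apply: eq_bigr => k _; rewrite /term exprS mulN1r mulNr //.
apply/eqP; rewrite -addr_eq0 addrC -h //.
Qed.

Theorem theorem2p8 (m n : nat) (hm : (3 <= m)%N) (hn : (0 < n)%N) :
  (forall N : nat, (n < N)%N ->
     ((sigmap m n)%:Z = \sum_(0 <= k < N) term m n k))
  /\ (forall k : nat, (n < k)%N -> term m n k = 0).
Proof.
split.
  by move=> N hN; rewrite big_mkord; exact: main_sum.
move=> k hk; rewrite /term.
rewrite !ppart_neg ?mulr0 ?addr0 //; rewrite subr_lt0 ltz_nat.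
  by rewrite QnumE; [nia | lia].
by rewrite PnumE; [nia | lia].
Qed.
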